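(* Consider the HYZ12 protocol with $k$ sites and accuracy parameter $\varepsilon$ with $\varepsilon\sqrt{k}<1$, run on the event stream generated by the round-robin adversary (both described in the context). Fix the transcript (all states of the adversary, sites and server) up to the initiation of a round at event count $n_0\ge 4\sqrt{k}/\varepsilon$, and consider the execution from event $n_0+1$ onward. Let $R$ be the number of distinct sites that send a Report message to the server during the next $n_0$ events. Then \[ \Pr\!\left[R>\tfrac{k}{8}\right]\;\ge\;1-\exp\!\left(-\tfrac{\sqrt{k}}{32\varepsilon}\right). \]
   Context: Distributed counting: a server and $k$ sites; events arrive one at a time, each at some site; $n_i$ is the number of events at site $i$ so far and $n=\sum_in_i$ is the event count. ${\rm Geom}(q)$ is the geometric distribution on $\{1,2,\dots\}$. Doubling subprotocol: each site, after incrementing $n_i$, sends $(i,n_i)$ to the server whenever $n_i$ is a power of $2$. The server keeps $n'_i$ (initially $0$), $n'=\sum_in'_i$, threshold $\tau=1$; upon receiving $(i,n_i)$ it sets $n'\gets n'+n_i-n'_i$, $n'_i\gets n_i$, and if $n'\ge2\tau$ triggers BoundaryReached$(n')$ and sets $\tau\gets n'$. HYZ12 protocol: each site keeps a transmission probability $p$ (initially $1$, updated by server broadcasts) and $n_i$; on each event at site $i$, $n_i\gets n_i+1$ and independently with probability $p$ the site sends Report$(i,n_i)$. The server keeps $\bar n_i=\hat n_i=0$ for each $i$ and $p=1$. On Report$(i,\bar n)$: $\bar n_i\gets\bar n$, $\hat n_i\gets\bar n_i-1+1/p$, publish $\hat n=\sum_j\hat n_j$. On BoundaryReached$(n')$ (reports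 processed first): a new round starts; $p_{\rm old}\gets p$, $p\gets2^{\min\{0,\lfloor\log_2(\sqrt k/(\varepsilon n'))\rfloor\}}$; if $p<1$, for each $i$ sample independently $Z_i=B\cdot G$, $B\sim{\rm Bernoulli}(1-p/p_{\rm old})$, $G\sim{\rm Geom}(p)$, set $\bar n_i\gets\max\{0,\bar n_i-Z_i\}$, $\hat n_i\gets0$ if $\bar n_i=0$ else $\bar n_i-1+1/p$, and broadcast $p$. Round-robin adversary: start with current site $i=1$ and record the current published estimate $\hat n_{\rm last}$. Repeatedly inject events at the current site $i$ until the published estimate differs from $\hat n_{\rm last}$; then set $\hat n_{\rm last}$ to the new estimate and move to site $1+(i\bmod k)$. *)

(* Defs.v *)
From Stdlib Require Import Reals List Arith PeanoNat ZArith ClassicalEpsilon.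
From Coquelicot Require Import Coquelicot.
Open Scope R_scope.

(* Discrete probabilistic programs (finite depth, countable branching) *)

Inductive dist (A : Type) : Type :=
  | Ret : A -> dist A
  | Flip : R -> (bool -> dist A) -> dist A      (* Bernoulli(q): true w.p. q *)
  | GeomS : R -> (nat -> dist A) -> dist A.     (* Geom(q) on {1,2,...} *)
Arguments Ret {A} _.
Arguments Flip {A} _ _.
Arguments GeomS {A} _ _.

Fixpoint bind {A B : Type} (d : dist A) (f : A -> dist B) : dist B :=
  match d with
  | Ret a => f a
  | Flip q k => Flip q (fun b => bind (k b) f)
  | GeomS q k => GeomS q (fun g => bind (k g) f)
  end.

Fixpoint Expect {A : Type} (d : dist A) (f : A -> R) : R :=
  match d with
  | Ret a => f a
  | Flip q k => q * Expect (k true) f + (1 - q) * Expect (k false) f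
  | GeomS q k => Series (fun j => (1 - q) ^ j * q * Expect (k (S j)) f)
  end.

Definition Prob {A : Type} (d : dist A) (P : A -> Prop) : R :=
  Expect d (fun a => match excluded_middle_informative (P a) with
                     | left _ => 1 | right _ => 0 end).

Fixpoint in_support {A : Type} (d : dist A) (a : A) : Prop :=
  match d with
  | Ret b => a = b
  | Flip q k => (0 < q /\ in_support (k true) a) \/ (q < 1 /\ in_support (k false) a)
  | GeomS q k => exists j : nat, 0 < (1 - q) ^ j * q /\ in_support (k (S j)) a
  end.

(* Sites are numbered 1..k.                                            *)

Record state : Type := mkState {
  st_n     : nat -> nat;
  st_sitep : R;            (* transmission probability held by the sites *)
  (* server, HYZ12 part *)
  st_nbar  : nat -> nat;
  st_nhat  : nat -> R;
  st_p     : R;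
  st_pub   : R;            (* currently published estimate \hat n *)
  (* server, doubling part *)
  st_dn    : nat -> nat;
  st_dsum  : nat;
  st_tau   : nat;
  (* adversary *)
  st_cur   : nat;
  st_last  : R
}.

Definition upd {T : Type} (f : nat -> T) (i : nat) (v : T) : nat -> T :=
  fun j => if Nat.eqb j i then v else f j.

Fixpoint sumR (f : nat -> R) (m : nat) : R :=
  match m with
  | O => 0
  | S m' => sumR f m' + f m
  end.

Definition is_pow2 (m : nat) : bool := Nat.eqb (2 ^ Nat.log2 m) m.

Definition floor_log2 (x : R) : Z := Int_part (ln x / ln 2).

Definition new_p (k : nat) (eps : R) (n' : nat) : R :=
  powerRZ 2 (Z.min 0 (floor_log2 (sqrt (INR k) / (eps * INR n')))).

Definition init_state : state :=
  {| st_n := fun _ => 0%nat; st_sitep := 1;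
     st_nbar := fun _ => 0%nat; st_nhat := fun _ => 0; st_p := 1; st_pub := 0;
     st_dn := fun _ => 0%nat; st_dsum := 0%nat; st_tau := 1%nat;
     st_cur := 1%nat; st_last := 0 |}.

Definition set_nbar_nhat (s : state) (i : nat) (nb : nat) (nh : R) : state :=
  {| st_n := st_n s; st_sitep := st_sitep s;
     st_nbar := upd (st_nbar s) i nb; st_nhat := upd (st_nhat s) i nh;
     st_p := st_p s; st_pub := st_pub s;
     st_dn := st_dn s; st_dsum := st_dsum s; st_tau := st_tau s;
     st_cur := st_cur s; st_last := st_last s |}.

(* Resampling of \bar n_i at the start of a new round, for the sites in l:
   Z_i = B * G with B ~ Bernoulli(1 - p/p_old), G ~ Geom(p), independent. *)
Fixpoint resample (l : list nat) (p pold : R) (s : state) : dist state :=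
  match l with
  | nil => Ret s
  | i :: l' =>
      Flip (1 - p / pold) (fun b =>
        if b then
          GeomS p (fun g =>
            let nb := (st_nbar s i - g)%nat in
            let nh := if Nat.eqb nb 0 then 0 else INR nb - 1 + 1 / p in
            resample l' p pold (set_nbar_nhat s i nb nh))
        else
          let nb := st_nbar s i in
          let nh := if Nat.eqb nb 0 then 0 else INR nb - 1 + 1 / p in
          resample l' p pold (set_nbar_nhat s i nb nh))
  end.

Definition boundary (k : nat) (eps : R) (s : state) : dist state :=
  let n' := st_dsum s in
  let pold := st_p s in
  let p := new_p k eps n' in
  let s1 := {| st_n := st_n s; st_sitep := st_sitep s;
               st_nbar := st_nbar s; st_nhat := st_nhat s;
               st_p := p; st_pub := st_pub s;
               st_dn := st_dn s; st_dsum := st_dsum s; st_tau := n';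
               st_cur := st_cur s; st_last := st_last s |} in
  match Rlt_dec p 1 with
  | left _ =>
      bind (resample (seq 1 k) p pold s1) (fun s2 =>
        (* broadcast p to all sites *)
        Ret {| st_n := st_n s2; st_sitep := p;
               st_nbar := st_nbar s2; st_nhat := st_nhat s2;
               st_p := st_p s2; st_pub := st_pub s2;
               st_dn := st_dn s2; st_dsum := st_dsum s2; st_tau := st_tau s2;
               st_cur := st_cur s2; st_last := st_last s2 |})
  | right _ => Ret s1
  end.

(* One event injected by the adversary at its current site.
   Output: new state, [Some i] iff site i sent a Report during this event,
   and whether BoundaryReached was triggered during this event. *)
Definition step (k : nat) (eps : R) (s : state) : dist (state * option nat * bool) :=
  let i := st_cur s in
  let ni := S (st_n s i) in
  let s0 := {| st_n := upd (st_n s) i ni; st_sitep := st_sitep s;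
               st_nbar := st_nbar s; st_nhat := st_nhat s;
               st_p := st_p s; st_pub := st_pub s;
               st_dn := st_dn s; st_dsum := st_dsum s; st_tau := st_tau s;
               st_cur := st_cur s; st_last := st_last s |} in
  Flip (st_sitep s) (fun c =>
    (* HYZ12 report, processed first *)
    let s1 :=
      if c then
        let nbar' := upd (st_nbar s0) i ni in
        let nhat' := upd (st_nhat s0) i (INR ni - 1 + 1 / st_p s0) in
        {| st_n := st_n s0; st_sitep := st_sitep s0;
           st_nbar := nbar'; st_nhat := nhat';
           st_p := st_p s0; st_pub := sumR nhat' k;
           st_dn := st_dn s0; st_dsum := st_dsum s0; st_tau := st_tau s0;
           st_cur := st_cur s0; st_last := st_last s0 |}
      else s0 in
    let rep := if c then Some i else None in
    let after_doubling : dist (state * bool) :=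
      if is_pow2 ni then
        let dsum' := (st_dsum s1 + ni - st_dn s1 i)%nat in
        let s2 := {| st_n := st_n s1; st_sitep := st_sitep s1;
                     st_nbar := st_nbar s1; st_nhat := st_nhat s1;
                     st_p := st_p s1; st_pub := st_pub s1;
                     st_dn := upd (st_dn s1) i ni; st_dsum := dsum';
                     st_tau := st_tau s1;
                     st_cur := st_cur s1; st_last := st_last s1 |} in
        if Nat.leb (2 * st_tau s2) dsum'
        then bind (boundary k eps s2) (fun s3 => Ret (s3, true))
        else Ret (s2, false)
      else Ret (s1, false) in
    bind after_doubling (fun '(s3, bd) =>
      (* round-robin adversary observes the published estimate *)
      let s4 :=
        match Req_EM_T (st_pub s3) (st_last s3) with
        | left _ => s3
        | right _ =>
            {| st_n := st_n s3; st_sitep := st_sitep s3;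
               st_nbar := st_nbar s3; st_nhat := st_nhat s3;
               st_p := st_p s3; st_pub := st_pub s3;
               st_dn := st_dn s3; st_dsum := st_dsum s3; st_tau := st_tau s3;
               st_cur := S (Nat.modulo (st_cur s3) k); st_last := st_pub s3 |}
        end in
      Ret (s4, rep, bd))).

(* Execution of the first m events from the initial state; the boolean
   records whether the m-th event triggered BoundaryReached (a new round). *)
Fixpoint prefix (k : nat) (eps : R) (m : nat) : dist (state * bool) :=
  match m with
  | O => Ret (init_state, false)
  | S m' => bind (prefix k eps m') (fun '(s, _) =>
              bind (step k eps s) (fun '(s', _, bd) => Ret (s', bd)))
  end.

(* Execution of the next m events from state s; returns the list of sites
   that sent a Report (one entry per report, in order). *)
Fixpoint window (k : nat) (eps : R) (m : nat) (s : state) : dist (list nat) :=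
  match m with
  | O => Ret nil
  | S m' => bind (step k eps s) (fun '(s', rep, _) =>
              bind (window k eps m' s') (fun l =>
                Ret (match rep with Some i => i :: l | None => l end)))
  end.

Definition distinct_count (l : list nat) : nat := length (nodup Nat.eq_dec l).

(* Main.v *)
From Stdlib Require Import Reals List Lra Lia Arith PeanoNat ZArith ClassicalEpsilon.
From Coquelicot Require Import Coquelicot.
Require Import Defs.
Open Scope R_scope.

Fixpoint wf {A : Type} (d : dist A) : Prop :=
  match d with
  | Ret _ => True
  | Flip q k => 0 <= q <= 1 /\ (0 < q -> wf (k true)) /\ (q < 1 -> wf (k false))
  | GeomS q k => 0 < q <= 1 /\ (forall j, 0 < (1 - q) ^ j * q -> wf (k (S j)))
  end.

Lemma in_support_bind {A B : Type} (d : dist A) (f : A -> dist B) b :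
  in_support (bind d f) b -> exists a, in_support d a /\ in_support (f a) b.
Proof.
  induction d as [a|q k IH|q k IH]; simpl; intros H.
  - exists a; auto.
  - destruct H as [[Hq H]|[Hq H]].
    + destruct (IH true H) as [a [H1 H2]]; exists a; split; auto.
    + destruct (IH false H) as [a [H1 H2]]; exists a; split; auto.
  - destruct H as [j [Hj H]].
    destruct (IH (S j) H) as [a [H1 H2]]; exists a; split; auto. exists j; auto.
Qed.

Lemma wf_bind {A B : Type} (d : dist A) (f : A -> dist B) :
  wf d -> (forall a, in_support d a -> wf (f a)) -> wf (bind d f).
Proof.
  induction d as [a|q k IH|q k IH]; simpl; intros Hw Hf.
  - apply Hf; auto.
  - destruct Hw as [Hq [H1 H2]]; repeat split; try lra.
    + intro; apply IH; auto.
    + intro; apply IH; auto.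
  - destruct Hw as [Hq H1]; split; auto.
    intros j Hj; apply IH; auto. intros a Ha; apply Hf; exists j; auto.
Qed.

Lemma Expect_bind {A B : Type} (d : dist A) (f : A -> dist B) g :
  Expect (bind d f) g = Expect d (fun a => Expect (f a) g).
Proof.
  induction d as [a|q k IH|q k IH]; simpl.
  - reflexivity.
  - rewrite !IH; reflexivity.
  - apply Series_ext; intro n; rewrite IH; reflexivity.
Qed.

Lemma Expect_ext {A : Type} (d : dist A) f g :
  (forall a, f a = g a) -> Expect d f = Expect d g.
Proof.
  intros H; induction d as [a|q k IH|q k IH]; simpl.
  - auto.
  - rewrite !IH; reflexivity.
  - apply Series_ext; intro n; rewrite IH; reflexivity.
Qed.

Lemma geom_sum (q : R) : 0 < q <= 1 -> is_series (fun j => (1 - q) ^ j * q) 1.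
Proof.
  intros Hq.
  assert (H := is_series_geom (1 - q)).
  assert (Habs : Rabs (1 - q) < 1) by (rewrite Rabs_right; lra).
  specialize (H Habs).
  apply (is_series_scal_r q) in H.
  assert (E : / (1 - (1 - q)) * q = 1) by (field; lra).
  rewrite E in H. exact H.
Qed.

Lemma is_series_mul_l (c : R) (a : nat -> R) l :
  is_series a l -> is_series (fun n => c * a n) (c * l).
Proof. intros H. exact (is_series_scal_l c a l H). Qed.

Lemma Expect_bounds {A : Type} (d : dist A) (F : A -> R) lo hi :
  0 <= lo -> wf d -> (forall a, in_support d a -> lo <= F a <= hi) ->
  lo <= Expect d F <= hi.
Proof.
  intros Hlo; induction d as [a|q k IH|q k IH]; simpl; intros Hw HF.
  - apply HF; reflexivity.
  - destruct Hw as [Hq [H1 H2]].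
    destruct (Req_dec q 0) as [E0|E0].
    + subst q. assert (lo <= Expect (k false) F <= hi) by (apply IH; auto; [apply H2; lra| intros; apply HF; right; split; [lra|auto]]).
      nra.
    + destruct (Req_dec q 1) as [E1|E1].
      * subst q. assert (lo <= Expect (k true) F <= hi) by (apply IH; auto; [apply H1; lra| intros; apply HF; left; split; [lra|auto]]).
        nra.
      * assert (lo <= Expect (k false) F <= hi) by (apply IH; auto; [apply H2; lra| intros; apply HF; right; split; [lra|auto]]).
        assert (lo <= Expect (k true) F <= hi) by (apply IH; auto; [apply H1; lra| intros; apply HF; left; split; [lra|auto]]).
        nra.
  - destruct Hw as [Hq Hk].
    set (w := fun j => (1 - q) ^ j * q).
    assert (Hw0 : forall j, 0 <= w j).
    { intro j; unfold w. apply Rmult_le_pos; [apply pow_le; lra| lra]. }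
    assert (Hb : forall j, lo * w j <= w j * Expect (k (S j)) F <= hi * w j).
    { intro j. destruct (Rlt_or_le 0 (w j)) as [Hp|Hp].
      - assert (lo <= Expect (k (S j)) F <= hi).
        { apply IH; [apply Hk; exact Hp|]. intros a Ha; apply HF; exists j; split; auto. }
        nra.
      - assert (w j = 0) by (specialize (Hw0 j); lra). rewrite H. lra. }
    assert (Hs := geom_sum q Hq).
    assert (Hex : ex_series (fun j => hi * w j)).
    { eexists. apply (is_series_mul_l hi w). exact Hs. }
    assert (Hexa : ex_series (fun j => w j * Expect (k (S j)) F)).
    { apply (@ex_series_le R_AbsRing R_CompleteNormedModule _ (fun j => hi * w j)); auto.
      intro n; specialize (Hb n). specialize (Hw0 n).
      change (Rabs (w n * Expect (k (S n)) F) <= hi * w n).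
      rewrite Rabs_right; [lra|]. apply Rle_ge. nra. }
    assert (Slo : Series (fun j => lo * w j) = lo).
    { apply is_series_unique. assert (H := is_series_mul_l lo w 1 Hs).
      rewrite Rmult_1_r in H; exact H. }
    assert (Shi : Series (fun j => hi * w j) = hi).
    { apply is_series_unique. assert (H := is_series_mul_l hi w 1 Hs).
      rewrite Rmult_1_r in H; exact H. }
    split.
    + rewrite <- Slo. apply Series_le; auto. intro n; specialize (Hb n); specialize (Hw0 n).
      assert (0 <= lo * w n) by (apply Rmult_le_pos; auto). unfold w in *. split; lra.
    + rewrite <- Shi. apply Series_le; auto. intro n; specialize (Hb n); specialize (Hw0 n).
      assert (0 <= lo * w n) by (apply Rmult_le_pos; auto). unfold w in *. split; lra.
Qed.

Lemma Expect_ge {A : Type} (d : dist A) (F : A -> R) c hi :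
  wf d -> (forall a, in_support d a -> 0 <= F a <= hi) ->
  (forall a, in_support d a -> c <= F a) -> c <= Expect d F.
Proof.
  intros Hw H1 H2.
  destruct (Rle_or_lt c 0) as [Hc|Hc].
  - assert (0 <= Expect d F <= hi) by (apply Expect_bounds; auto; lra). lra.
  - assert (c <= Expect d F <= hi). { apply Expect_bounds; auto; [lra|]. intros a Ha; split; [apply H2|apply H1]; auto. }
    lra.
Qed.

Lemma pow2Z (z : Z) : powerRZ 2 z = exp (IZR z * ln 2).
Proof. rewrite powerRZ_Rpower by lra. unfold Rpower. reflexivity. Qed.

Lemma ln2_pos : 0 < ln 2.
Proof. rewrite <- ln_1. apply ln_increasing; lra. Qed.

Lemma exp_mono x y : x <= y -> exp x <= exp y.
Proof. intros H; destruct (Req_dec x y); [subst; lra| left; apply exp_increasing; lra]. Qed.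

Lemma ln_mono x y : 0 < x -> x <= y -> ln x <= ln y.
Proof. intros H1 H; destruct (Req_dec x y); [subst; lra| left; apply ln_increasing; lra]. Qed.

Lemma Int_part_mono a b : a <= b -> (Int_part a <= Int_part b)%Z.
Proof.
  intros H. destruct (base_Int_part a) as [A1 A2]. destruct (base_Int_part b) as [B1 B2].
  assert (IZR (Int_part a) < IZR (Int_part b) + 1) by lra.
  rewrite <- plus_IZR in H0. apply lt_IZR in H0. lia.
Qed.

Lemma new_p_bounds k eps n : 0 < new_p k eps n <= 1.
Proof.
  unfold new_p. rewrite pow2Z. split; [apply exp_pos|].
  rewrite <- exp_0. apply exp_mono.
  assert (IZR (Z.min 0 (floor_log2 (sqrt (INR k) / (eps * INR n)))) <= 0).
  { apply IZR_le. lia. }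
  assert (H2 := ln2_pos). nra.
Qed.

Lemma new_p_mono k eps a b : (1 <= k)%nat -> 0 < eps -> (0 < a <= b)%nat ->
  new_p k eps b <= new_p k eps a.
Proof.
  intros Hk He Hab. unfold new_p. rewrite !pow2Z. apply exp_mono.
  assert (H2 := ln2_pos).
  apply Rmult_le_compat_r; [lra|]. apply IZR_le.
  assert (Hs : 0 < sqrt (INR k)) by (apply sqrt_lt_R0; apply lt_0_INR; lia).
  assert (Ha : 0 < INR a) by (apply lt_0_INR; lia).
  assert (Hb : INR a <= INR b) by (apply le_INR; lia).
  assert (sqrt (INR k) / (eps * INR b) <= sqrt (INR k) / (eps * INR a)).
  { unfold Rdiv. apply Rmult_le_compat_l; [lra|]. apply Rinv_le_contravar; nra. }
  assert (0 < sqrt (INR k) / (eps * INR b)).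
  { apply Rdiv_lt_0_compat; nra. }
  unfold floor_log2.
  assert (Int_part (ln (sqrt (INR k) / (eps * INR b)) / ln 2) <= Int_part (ln (sqrt (INR k) / (eps * INR a)) / ln 2))%Z.
  { apply Int_part_mono. unfold Rdiv at 1 3. apply Rmult_le_compat_r.
    - left; apply Rinv_0_lt_compat; lra.
    - apply ln_mono; auto. }
  lia.
Qed.

Lemma new_p_lower k eps n : (1 <= k)%nat -> 0 < eps -> (0 < n)%nat ->
  Rmin 1 (sqrt (INR k) / (2 * eps * INR n)) <= new_p k eps n.
Proof.
  intros Hk He Hn. unfold new_p, floor_log2.
  set (x := sqrt (INR k) / (eps * INR n)).
  assert (Hs : 0 < sqrt (INR k)) by (apply sqrt_lt_R0; apply lt_0_INR; lia).
  assert (Ha : 0 < INR n) by (apply lt_0_INR; lia).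
  assert (Hx : 0 < x) by (apply Rdiv_lt_0_compat; nra).
  set (z := Int_part (ln x / ln 2)).
  destruct (Z.le_gt_cases 0 z) as [Hz|Hz].
  - rewrite Z.min_l by lia. simpl. apply Rmin_l.
  - rewrite Z.min_r by lia. eapply Rle_trans; [apply Rmin_r|].
    rewrite pow2Z. destruct (base_Int_part (ln x / ln 2)) as [_ B].
    fold z in B. assert (H2 := ln2_pos).
    assert (IZR z * ln 2 > ln x - ln 2).
    { assert (IZR z > ln x / ln 2 - 1) by lra.
      apply Rmult_gt_compat_r with (r := ln 2) in H; [|lra].
      replace ((ln x / ln 2 - 1) * ln 2) with (ln x - ln 2) in H by (field; lra). lra. }
    assert (sqrt (INR k) / (2 * eps * INR n) = exp (ln x - ln 2)).
    { unfold Rminus. rewrite exp_plus, exp_Ropp, !exp_ln by lra. unfold x. field. split; lra. }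
    rewrite H0. left. apply exp_increasing. lra.
Qed.

Fixpoint sumN (f : nat -> nat) (m : nat) : nat :=
  match m with O => O | S m' => (sumN f m' + f m)%nat end.

Lemma sumN_upd f i v m : (1 <= i <= m)%nat -> (sumN (upd f i v) m + f i = sumN f m + v)%nat.
Proof.
  induction m as [|m IH]; intros Hi; [lia|]. simpl.
  unfold upd at 2. destruct (Nat.eqb_spec (S m) i).
  - subst i. assert (sumN (upd f (S m) v) m = sumN f m).
    { clear IH Hi. assert (forall j, (j <= m)%nat -> sumN (upd f (S m) v) j = sumN f j).
      { induction j; intros; simpl; auto. rewrite IHj by lia. unfold upd.
        destruct (Nat.eqb_spec (S j) (S m)); [lia|reflexivity]. }
      apply H; lia. }
    lia.
  - assert (IH' := IH ltac:(lia)). lia.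
Qed.

Lemma sumR_upd f i v m : (1 <= i <= m)%nat -> sumR (upd f i v) m = sumR f m - f i + v.
Proof.
  induction m as [|m IH]; intros Hi; [lia|]. simpl.
  unfold upd at 2. destruct (Nat.eqb_spec (S m) i).
  - subst i. assert (sumR (upd f (S m) v) m = sumR f m).
    { clear IH Hi. assert (forall j, (j <= m)%nat -> sumR (upd f (S m) v) j = sumR f j).
      { induction j; intros; simpl; auto. rewrite IHj by lia. unfold upd.
        destruct (Nat.eqb_spec (S j) (S m)); [lia|reflexivity]. }
      apply H; lia. }
    rewrite H. ring.
  - rewrite IH by lia. ring.
Qed.

Lemma sumN_le f g m : (forall j, (1 <= j <= m)%nat -> (f j <= g j)%nat) -> (sumN f m <= sumN g m)%nat.
Proof.
  induction m; intros H; simpl; auto.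
  assert (H1 := H (S m) ltac:(lia)). assert (IH := IHm ltac:(intros; apply H; lia)). lia.
Qed.

Lemma sumN_half f g m : (forall j, (1 <= j <= m)%nat -> (f j <= 2 * g j)%nat /\ ((0 < f j)%nat -> (f j < 2 * g j)%nat)) ->
  (0 < sumN f m)%nat -> (sumN f m < 2 * sumN g m)%nat.
Proof.
  induction m; intros H Hp; simpl in *; [lia|].
  destruct (H (S m) ltac:(lia)) as [H1 H2].
  assert (Hle : (sumN f m <= 2 * sumN g m)%nat).
  { clear IHm Hp H1 H2. induction m; simpl; auto.
    destruct (H (S m) ltac:(lia)) as [H1 _]. assert (IH := IHm ltac:(intros; apply H; lia)). lia. }
  destruct (Nat.eq_dec (f (S m)) 0).
  - assert (IH := IHm ltac:(intros; apply H; lia) ltac:(lia)). lia.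
  - assert (H3 := H2 ltac:(lia)). lia.
Qed.

Lemma sumN_zero m : sumN (fun _ => 0%nat) m = 0%nat.
Proof. induction m; simpl; auto. rewrite IHm; reflexivity. Qed.

Definition next (k c : nat) : nat := S (Nat.modulo c k).

Lemma next_range k c : (1 <= k)%nat -> (1 <= next k c <= k)%nat.
Proof. intros Hk. unfold next. assert (Nat.modulo c k < k)%nat by (apply Nat.mod_upper_bound; lia). lia. Qed.

Lemma site_formula k c j : (1 <= c <= k)%nat -> Nat.iter j (next k) c = S (Nat.modulo (c - 1 + j) k).
Proof.
  intros Hc. induction j.
  - simpl. rewrite Nat.add_0_r. rewrite Nat.mod_small by lia. lia.
  - simpl. rewrite IHj. unfold next. f_equal.
    replace (c - 1 + S j)%nat with ((c - 1 + j) + 1)%nat by lia.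
    rewrite (Nat.add_mod (c - 1 + j) 1 k) by lia.
    destruct (Nat.eq_dec k 1).
    + subst k. rewrite !Nat.mod_1_r. reflexivity.
    + rewrite (Nat.mod_small 1 k) by lia. f_equal. lia.
Qed.

Lemma site_neq k c j : (1 <= c <= k)%nat -> (1 <= j < k)%nat -> Nat.iter j (next k) c <> c.
Proof.
  intros Hc Hj. rewrite site_formula by auto. intros E.
  assert (E' : Nat.modulo (c - 1 + j) k = (c - 1)%nat) by lia.
  assert (Hd := Nat.div_mod (c - 1 + j) k ltac:(lia)).
  rewrite E' in Hd.
  assert (Hq : (Nat.div (c - 1 + j) k < 2)%nat).
  { apply Nat.div_lt_upper_bound; lia. }
  destruct (Nat.div (c - 1 + j) k) as [|[|q]]; lia.
Qed.

Lemma is_pow2_pow e : is_pow2 (2 ^ e) = true.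
Proof. unfold is_pow2. rewrite Nat.log2_pow2 by lia. apply Nat.eqb_refl. Qed.

Lemma is_pow2_true n : is_pow2 n = true -> n = (2 ^ Nat.log2 n)%nat.
Proof. unfold is_pow2. intros H. apply Nat.eqb_eq in H. auto. Qed.

Lemma dn_step n dn : (dn <= n)%nat -> ((0 < n)%nat -> (exists e, dn = 2 ^ e)%nat /\ (n < 2 * dn)%nat) ->
  let nd := if is_pow2 (S n) then S n else dn in
  (nd <= S n)%nat /\ (exists e, nd = 2 ^ e)%nat /\ (S n < 2 * nd)%nat.
Proof.
  intros H1 H2 nd. unfold nd. destruct (is_pow2 (S n)) eqn:E.
  - split; [lia|]. split; [exists (Nat.log2 (S n)); apply is_pow2_true; auto| lia].
  - destruct (Nat.eq_dec n 0).
    + subst n. change (is_pow2 (2 ^ 0) = false) in E. rewrite is_pow2_pow in E. discriminate.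
    + destruct (H2 ltac:(lia)) as [[e He] Hlt]. split; [lia|]. split; [exists e; auto|].
      destruct (Nat.eq_dec (S n) (2 * dn)).
      * rewrite e0, He in E. replace (2 * 2 ^ e)%nat with (2 ^ S e)%nat in E by (simpl; lia).
        rewrite is_pow2_pow in E; discriminate.
      * lia.
Qed.

Definition fhat (p : R) (nb : nat) : R := if Nat.eqb nb 0 then 0 else INR nb - 1 + 1 / p.

Lemma resample_spec l p pold s s' : in_support (resample l p pold s) s' ->
  st_n s' = st_n s /\ st_sitep s' = st_sitep s /\ st_p s' = st_p s /\ st_pub s' = st_pub s /\
  st_dn s' = st_dn s /\ st_dsum s' = st_dsum s /\ st_tau s' = st_tau s /\ st_cur s' = st_cur s /\
  st_last s' = st_last s /\
  (forall j, (st_nbar s' j <= st_nbar s j)%nat) /\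
  (forall j, In j l -> st_nhat s' j = fhat p (st_nbar s' j)) /\
  (forall j, ~ In j l -> st_nhat s' j = st_nhat s j /\ st_nbar s' j = st_nbar s j).
Proof.
  revert s. induction l as [|i l IH]; intros s H; simpl in H.
  - subst s'. repeat split; auto. intros j [].
  - assert (K : forall nb, (nb <= st_nbar s i)%nat ->
       in_support (resample l p pold (set_nbar_nhat s i nb (if Nat.eqb nb 0 then 0 else INR nb - 1 + 1 / p))) s' ->
       st_n s' = st_n s /\ st_sitep s' = st_sitep s /\ st_p s' = st_p s /\ st_pub s' = st_pub s /\
  st_dn s' = st_dn s /\ st_dsum s' = st_dsum s /\ st_tau s' = st_tau s /\ st_cur s' = st_cur s /\
  st_last s' = st_last s /\
  (forall j, (st_nbar s' j <= st_nbar s j)%nat) /\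
  (forall j, In j (i :: l) -> st_nhat s' j = fhat p (st_nbar s' j)) /\
  (forall j, ~ In j (i :: l) -> st_nhat s' j = st_nhat s j /\ st_nbar s' j = st_nbar s j)).
    { intros nb Hnb Hs.
      destruct (IH _ Hs) as (A1&A2&A3&A4&A5&A6&A7&A8&A9&A10&A11&A12). simpl in *.
      do 9 (split; [auto|]). split; [|split].
      - intro j. specialize (A10 j). unfold upd in A10. destruct (Nat.eqb_spec j i); subst; lia.
      - intros j [Hj|Hj].
        + subst j. destruct (in_dec Nat.eq_dec i l) as [Hin|Hin]; [apply A11; auto|].
          destruct (A12 i Hin) as [B1 B2]. rewrite B1, B2. unfold upd. rewrite Nat.eqb_refl. reflexivity.
        + apply A11; auto.
      - intros j Hj. assert (j <> i) by (intro; apply Hj; left; auto).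
        destruct (A12 j ltac:(intro; apply Hj; right; auto)) as [B1 B2]. rewrite B1, B2. unfold upd.
        destruct (Nat.eqb_spec j i); [lia|split; reflexivity]. }
    destruct H as [[_ H]|[_ H]].
    + destruct H as [g [_ H]]. apply (K (st_nbar s i - S g)%nat); auto. lia.
    + apply (K (st_nbar s i)); auto.
Qed.

Lemma resample_wf l p pold s : 0 < p <= 1 -> p <= pold ->
  wf (resample l p pold s).
Proof.
  intros Hp Hpo. revert s. induction l as [|i l IH]; intros s; simpl; auto.
  assert (0 < p / pold <= 1).
  { split; [apply Rdiv_lt_0_compat; lra|]. apply Rmult_le_reg_r with pold; [lra|].
    unfold Rdiv. rewrite Rmult_assoc, Rinv_l by lra. lra. }
  split; [lra|split].
  - intros _. simpl. split; [lra|]. intros; apply IH.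
  - intros _. apply IH.
Qed.

Lemma boundary_spec k eps s2 s3 : in_support (boundary k eps s2) s3 ->
  let p' := new_p k eps (st_dsum s2) in
  st_p s3 = p' /\ st_tau s3 = st_dsum s2 /\ st_n s3 = st_n s2 /\ st_dn s3 = st_dn s2 /\
  st_dsum s3 = st_dsum s2 /\ st_pub s3 = st_pub s2 /\ st_cur s3 = st_cur s2 /\ st_last s3 = st_last s2 /\
  (forall j, (st_nbar s3 j <= st_nbar s2 j)%nat) /\
  (p' < 1 -> st_sitep s3 = p' /\ forall j, (1 <= j <= k)%nat -> st_nhat s3 j = fhat p' (st_nbar s3 j)) /\
  (~ p' < 1 -> st_sitep s3 = st_sitep s2 /\ st_nbar s3 = st_nbar s2 /\ st_nhat s3 = st_nhat s2).
Proof.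
  intros H p'. unfold boundary in H. fold p' in H.
  destruct (Rlt_dec p' 1) as [Hlt|Hge].
  - apply in_support_bind in H. destruct H as [s4 [H1 H2]]. simpl in H2. subst s3.
    destruct (resample_spec _ _ _ _ _ H1) as (A1&A2&A3&A4&A5&A6&A7&A8&A9&A10&A11&A12). simpl in *.
    repeat split; auto; try tauto.
    intros j Hj. apply A11. apply in_seq. lia.
  - simpl in H. subst s3. simpl. repeat split; auto; tauto.
Qed.

Lemma boundary_wf k eps s2 : 0 < st_p s2 -> new_p k eps (st_dsum s2) <= st_p s2 ->
  wf (boundary k eps s2).
Proof.
  intros H1 H2. unfold boundary.
  destruct (Rlt_dec (new_p k eps (st_dsum s2)) 1); simpl; auto.
  apply wf_bind. apply resample_wf; auto. apply new_p_bounds. simpl; auto.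
Qed.

Definition s0f (s : state) : state :=
  let i := st_cur s in
  let ni := S (st_n s i) in
  {| st_n := upd (st_n s) i ni; st_sitep := st_sitep s;
               st_nbar := st_nbar s; st_nhat := st_nhat s;
               st_p := st_p s; st_pub := st_pub s;
               st_dn := st_dn s; st_dsum := st_dsum s; st_tau := st_tau s;
               st_cur := st_cur s; st_last := st_last s |}.

Definition s1f (k : nat) (s : state) (c : bool) : state :=
  let i := st_cur s in
  let ni := S (st_n s i) in
  let s0 := s0f s in
      if c then
        let nbar' := upd (st_nbar s0) i ni in
        let nhat' := upd (st_nhat s0) i (INR ni - 1 + 1 / st_p s0) in
        {| st_n := st_n s0; st_sitep := st_sitep s0;
           st_nbar := nbar'; st_nhat := nhat';
           st_p := st_p s0; st_pub := sumR nhat' k;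
           st_dn := st_dn s0; st_dsum := st_dsum s0; st_tau := st_tau s0;
           st_cur := st_cur s0; st_last := st_last s0 |}
      else s0.

Definition s2f (s1 : state) (i ni : nat) : state :=
        let dsum' := (st_dsum s1 + ni - st_dn s1 i)%nat in
        {| st_n := st_n s1; st_sitep := st_sitep s1;
                     st_nbar := st_nbar s1; st_nhat := st_nhat s1;
                     st_p := st_p s1; st_pub := st_pub s1;
                     st_dn := upd (st_dn s1) i ni; st_dsum := dsum';
                     st_tau := st_tau s1;
                     st_cur := st_cur s1; st_last := st_last s1 |}.

Definition dblf (k : nat) (eps : R) (s1 : state) (i ni : nat) : dist (state * bool) :=
      if is_pow2 ni then
        let s2 := s2f s1 i ni in
        if Nat.leb (2 * st_tau s2) (st_dsum s2)
        then bind (boundary k eps s2) (fun s3 => Ret (s3, true))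
        else Ret (s2, false)
      else Ret (s1, false).

Definition advf (k : nat) (s3 : state) : state :=
        match Req_EM_T (st_pub s3) (st_last s3) with
        | left _ => s3
        | right _ =>
            {| st_n := st_n s3; st_sitep := st_sitep s3;
               st_nbar := st_nbar s3; st_nhat := st_nhat s3;
               st_p := st_p s3; st_pub := st_pub s3;
               st_dn := st_dn s3; st_dsum := st_dsum s3; st_tau := st_tau s3;
               st_cur := S (Nat.modulo (st_cur s3) k); st_last := st_pub s3 |}
        end.

Definition branchf (k : nat) (eps : R) (s : state) (c : bool) : dist (state * option nat * bool) :=
  bind (dblf k eps (s1f k s c) (st_cur s) (S (st_n s (st_cur s))))
       (fun '(s3, bd) => Ret (advf k s3, (if c then Some (st_cur s) else None), bd)).

Lemma step_eq k eps s : step k eps s = Flip (st_sitep s) (branchf k eps s).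
Proof. reflexivity. Qed.

Definition SiteInv (p : R) (n nb : nat) (nh : R) (dn : nat) : Prop :=
  (nb <= n)%nat /\ nh = fhat p nb /\ (dn <= n)%nat /\
  ((0 < n)%nat -> (exists e, dn = 2 ^ e)%nat /\ (n < 2 * dn)%nat).

Definition CInv0 (k : nat) (eps : R) (s : state) : Prop :=
  (1 <= st_cur s <= k)%nat /\ st_sitep s = st_p s /\ 0 < st_p s <= 1 /\
  (1 <= st_tau s)%nat /\ (st_p s = 1 \/ st_p s = new_p k eps (st_tau s)) /\
  (forall j, (1 <= j <= k)%nat -> SiteInv (st_p s) (st_n s j) (st_nbar s j) (st_nhat s j) (st_dn s j)) /\
  st_dsum s = sumN (st_dn s) k.

Definition CInv (k : nat) (eps : R) (s : state) : Prop := CInv0 k eps s /\ st_pub s = st_last s.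

Definition Vs (k : nat) (s : state) : R :=
  sumR (st_nhat s) k - st_nhat s (st_cur s) + INR (st_n s (st_cur s)) + 1 / st_p s.

Lemma mkCInv0 k eps s : (1 <= st_cur s <= k)%nat -> st_sitep s = st_p s -> 0 < st_p s <= 1 ->
  (1 <= st_tau s)%nat -> (st_p s = 1 \/ st_p s = new_p k eps (st_tau s)) ->
  (forall j, (1 <= j <= k)%nat -> SiteInv (st_p s) (st_n s j) (st_nbar s j) (st_nhat s j) (st_dn s j)) ->
  st_dsum s = sumN (st_dn s) k -> CInv0 k eps s.
Proof. intros; unfold CInv0; tauto. Qed.

Lemma mkSiteInv p n nb nh dn : (nb <= n)%nat -> nh = fhat p nb -> (dn <= n)%nat ->
  ((0 < n)%nat -> (exists e, dn = 2 ^ e)%nat /\ (n < 2 * dn)%nat) -> SiteInv p n nb nh dn.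
Proof. intros; unfold SiteInv; tauto. Qed.

Lemma s1_site k eps s c j : CInv0 k eps s -> (1 <= j <= k)%nat ->
  (st_nbar (s1f k s c) j <= st_n (s1f k s c) j)%nat /\
  st_nhat (s1f k s c) j = fhat (st_p s) (st_nbar (s1f k s c) j).
Proof.
  intros (H1&H2&H3&H4&H5&H6&H7) Hj. destruct (H6 j Hj) as (S1&S2&S3&S4).
  destruct c; simpl; unfold upd; destruct (Nat.eqb_spec j (st_cur s));
    try subst j; rewrite ?Nat.eqb_refl; split; try lia; auto.
Qed.

Lemma new_p_le_stp k eps s d : (1 <= k)%nat -> 0 < eps -> CInv0 k eps s -> (st_tau s <= d)%nat ->
  new_p k eps d <= st_p s.
Proof.
  intros Hk He (H1&H2&H3&H4&H5&H6&H7) Hd. destruct H5 as [E|E].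
  - rewrite E. apply new_p_bounds.
  - rewrite E. apply new_p_mono; auto; lia.
Qed.

Lemma dbl_spec k eps s c s3 bd : (1 <= k)%nat -> 0 < eps -> CInv0 k eps s ->
  in_support (dblf k eps (s1f k s c) (st_cur s) (S (st_n s (st_cur s)))) (s3, bd) ->
  st_n s3 = upd (st_n s) (st_cur s) (S (st_n s (st_cur s))) /\ st_cur s3 = st_cur s /\
  st_last s3 = st_last s /\ st_pub s3 = st_pub (s1f k s c) /\
  CInv0 k eps s3 /\ (st_dsum s <= st_dsum s3)%nat /\
  (bd = false -> st_tau s3 = st_tau s /\ st_p s3 = st_p s /\ st_nhat s3 = st_nhat (s1f k s c)) /\
  (bd = true -> st_tau s3 = st_dsum s3 /\ st_p s3 = new_p k eps (st_dsum s3) /\ (2 * st_tau s <= st_dsum s3)%nat).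
Proof.
  intros Hk He HC Hs.
  assert (HC' := HC). destruct HC' as (H1&H2&H3&H4&H5&H6&H7).
  set (i := st_cur s) in *. set (ni := S (st_n s i)) in *.
  set (s1 := s1f k s c) in *.
  assert (E1n : st_n s1 = upd (st_n s) i ni) by (unfold s1; destruct c; reflexivity).
  assert (E1c : st_cur s1 = i) by (unfold s1; destruct c; reflexivity).
  assert (E1l : st_last s1 = st_last s) by (unfold s1; destruct c; reflexivity).
  assert (E1p : st_p s1 = st_p s) by (unfold s1; destruct c; reflexivity).
  assert (E1sp : st_sitep s1 = st_sitep s) by (unfold s1; destruct c; reflexivity).
  assert (E1dn : st_dn s1 = st_dn s) by (unfold s1; destruct c; reflexivity).
  assert (E1ds : st_dsum s1 = st_dsum s) by (unfold s1; destruct c; reflexivity).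
  assert (E1t : st_tau s1 = st_tau s) by (unfold s1; destruct c; reflexivity).
  assert (Hsite1 := fun j => s1_site k eps s c j HC).
  fold s1 in Hsite1.
  assert (Hi : (1 <= i <= k)%nat) by exact H1.
  set (dnN := if is_pow2 ni then upd (st_dn s) i ni else st_dn s).
  assert (HdnN : forall j, (1 <= j <= k)%nat ->
     (dnN j <= upd (st_n s) i ni j)%nat /\ ((0 < upd (st_n s) i ni j)%nat -> (exists e, dnN j = 2 ^ e)%nat /\ (upd (st_n s) i ni j < 2 * dnN j)%nat)).
  { intros j Hj. destruct (H6 j Hj) as (S1&S2&S3&S4).
    unfold dnN, upd. destruct (Nat.eqb_spec j i).
    - subst j. destruct (H6 i Hi) as (T1&T2&T3&T4).
      destruct (dn_step (st_n s i) (st_dn s i) T3 T4) as (U1&U2&U3). fold ni in U1, U2, U3.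
      destruct (is_pow2 ni) eqn:Ep; cbv beta; rewrite ?Nat.eqb_refl; split; auto.
    - destruct (is_pow2 ni); [|auto]. destruct (Nat.eqb_spec j i); [lia|auto]. }
  assert (HdsN : (is_pow2 ni = true -> sumN dnN k = (st_dsum s + ni - st_dn s i)%nat) /\
                 (is_pow2 ni = false -> sumN dnN k = st_dsum s)).
  { unfold dnN. destruct (H6 i Hi) as (T1&T2&T3&T4). assert ((st_dn s i <= ni)%nat) by (unfold ni; lia).
    split; intros Ep; rewrite Ep.
    - assert (X := sumN_upd (st_dn s) i ni k Hi). rewrite H7. lia.
    - rewrite H7. reflexivity. }
  assert (Hdni : (st_dn s i <= ni)%nat) by (destruct (H6 i Hi) as (T1&T2&T3&T4); unfold ni; lia).
  unfold dblf in Hs.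
  destruct (is_pow2 ni) eqn:Ep.
  - destruct HdsN as [HdsN _]. specialize (HdsN eq_refl).
    assert (E2 : st_dsum (s2f s1 i ni) = sumN dnN k) by (rewrite HdsN; simpl; rewrite E1ds, E1dn; reflexivity).
    assert (E2dn : st_dn (s2f s1 i ni) = dnN) by (unfold dnN; try rewrite Ep; simpl; rewrite E1dn; reflexivity).
    destruct (Nat.leb (2 * st_tau (s2f s1 i ni)) (st_dsum (s2f s1 i ni))) eqn:El.
    + apply in_support_bind in Hs. destruct Hs as [s4 [Hb Hr]]. simpl in Hr. inversion Hr; subst s4 bd. clear Hr.
      apply Nat.leb_le in El. simpl in El. rewrite E1t, E1ds, E1dn in El. rewrite <- HdsN in El.
      destruct (boundary_spec _ _ _ _ Hb) as (B1&B2&B3&B4&B5&B6&B7&B8&B9&B10&B11).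
      rewrite E2 in B1, B2, B5, B10, B11. rewrite E2dn in B4.
      simpl in B1, B2, B3, B4, B5, B6, B7, B8, B9, B10, B11.
      assert (Hp' := new_p_bounds k eps (sumN dnN k)).
      assert (Hle : new_p k eps (sumN dnN k) <= st_p s) by (apply (new_p_le_stp k eps s); auto; lia).
      split; [rewrite B3, E1n; reflexivity|].
      split; [rewrite B7; auto|].
      split; [rewrite B8; auto|].
      split; [rewrite B6; reflexivity|].
      split.
      * apply mkCInv0.
        -- rewrite B7, E1c; lia.
        -- destruct (Rlt_dec (new_p k eps (sumN dnN k)) 1) as [Hl|Hl].
           ++ rewrite (proj1 (B10 Hl)), B1. reflexivity.
           ++ rewrite (proj1 (B11 Hl)), E1sp, B1, H2. lra.
        -- rewrite B1; lra.
        -- rewrite B2; lia.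
        -- right. rewrite B1, B2. reflexivity.
        -- intros j Hj. destruct (HdnN j Hj) as [D1 D2]. destruct (Hsite1 j Hj) as [G1 G2].
           rewrite E1n in G1.
           assert (Hnb := B9 j).
           unfold SiteInv. rewrite B3, B4, B1, E1n.
           destruct (Rlt_dec (new_p k eps (sumN dnN k)) 1) as [Hl|Hl].
           ++ destruct (B10 Hl) as [_ B10']. rewrite (B10' j Hj). apply mkSiteInv; auto; lia.
           ++ destruct (B11 Hl) as (_&B11a&B11b). rewrite B11a, B11b.
              assert (new_p k eps (sumN dnN k) = 1) by lra.
              assert (st_p s = 1) by lra.
              rewrite H, <- H0. apply mkSiteInv; auto; lia.
        -- rewrite B5, B4. reflexivity.
      * split; [rewrite B5, HdsN; lia|].
        split; [discriminate|].
        intros _. rewrite B5, B2, B1. split; [reflexivity|split; [reflexivity|lia]].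
    + simpl in Hs. inversion Hs; subst s3 bd. clear Hs. unfold s2f; simpl.
      split; [rewrite E1n; reflexivity|].
      split; [rewrite E1c; reflexivity|].
      split; [rewrite E1l; reflexivity|].
      split; [reflexivity|].
      split.
      * apply mkCInv0; simpl.
        -- rewrite E1c; lia.
        -- rewrite E1sp, E1p; auto.
        -- rewrite E1p; lra.
        -- rewrite E1t; lia.
        -- rewrite E1p, E1t; auto.
        -- intros j Hj. destruct (HdnN j Hj) as [D1 D2]. destruct (Hsite1 j Hj) as [G1 G2].
           rewrite E1n in G1. unfold SiteInv. rewrite E1n, E1p. rewrite E1dn.
           unfold dnN in D1, D2; try rewrite Ep in D1, D2.
           apply mkSiteInv; auto; lia.
        -- rewrite E1ds, E1dn. rewrite <- HdsN. reflexivity.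
      * split; [rewrite E1ds, E1dn; lia|].
        split; [intros _; rewrite E1t, E1p; auto|discriminate].
  - destruct HdsN as [_ HdsN]. specialize (HdsN eq_refl).
    simpl in Hs. inversion Hs; subst s3 bd. clear Hs.
    split; [exact E1n|]. split; [exact E1c|]. split; [exact E1l|]. split; [reflexivity|].
    split.
    * apply mkCInv0.
      -- rewrite E1c; lia.
      -- rewrite E1sp, E1p; auto.
      -- rewrite E1p; lra.
      -- rewrite E1t; lia.
      -- rewrite E1p, E1t; auto.
      -- intros j Hj. destruct (HdnN j Hj) as [D1 D2]. destruct (Hsite1 j Hj) as [G1 G2].
         rewrite E1n in G1. unfold SiteInv. rewrite E1n, E1p. rewrite E1dn.
         unfold dnN in D1, D2; try rewrite Ep in D1, D2.
         apply mkSiteInv; auto; lia.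
      -- rewrite E1ds, E1dn. exact H7.
    * split; [rewrite E1ds; lia|].
      split; [intros _; rewrite E1t, E1p; auto|discriminate].
Qed.

Lemma synced_V k eps s : CInv0 k eps s -> st_last s = sumR (st_nhat s) k -> Vs k s > st_last s.
Proof.
  intros (H1&H2&H3&H4&H5&H6&H7) HL. unfold Vs. rewrite HL.
  destruct (H6 (st_cur s) H1) as (S1&S2&S3&S4). rewrite S2. unfold fhat.
  assert (0 < 1 / st_p s) by (apply Rdiv_lt_0_compat; lra).
  assert (INR (st_nbar s (st_cur s)) <= INR (st_n s (st_cur s))) by (apply le_INR; auto).
  assert (0 <= INR (st_nbar s (st_cur s))) by apply pos_INR.
  destruct (Nat.eqb_spec (st_nbar s (st_cur s)) 0); lra.
Qed.

Lemma pub_s1 k s c : (1 <= st_cur s <= k)%nat ->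
  st_pub (s1f k s c) = if c then Vs k s else st_pub s.
Proof.
  intros Hi. destruct c; [|reflexivity]. simpl. rewrite sumR_upd by auto.
  unfold Vs. change (match st_n s (st_cur s) with | 0%nat => 1 | S _ => INR (st_n s (st_cur s)) + 1 end) with (INR (S (st_n s (st_cur s)))). rewrite S_INR. ring.
Qed.

Lemma branch_spec k eps s c s' rep bd : (1 <= k)%nat -> 0 < eps -> CInv k eps s ->
  in_support (branchf k eps s c) (s', rep, bd) ->
  CInv k eps s' /\ rep = (if c then Some (st_cur s) else None) /\
  st_n s' = upd (st_n s) (st_cur s) (S (st_n s (st_cur s))) /\
  (st_dsum s <= st_dsum s')%nat /\
  (bd = false -> st_tau s' = st_tau s /\ st_p s' = st_p s /\
      (c = true -> Vs k s' > st_last s') /\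
      (c = false -> Vs k s' = Vs k s + 1 /\ st_last s' = st_last s)) /\
  (bd = true -> st_tau s' = st_dsum s' /\ st_p s' = new_p k eps (st_dsum s') /\ (2 * st_tau s <= st_dsum s')%nat) /\
  (c = true -> Vs k s <> st_last s -> st_cur s' = next k (st_cur s)) /\
  ((c = false \/ Vs k s = st_last s) -> st_cur s' = st_cur s).
Proof.
  intros Hk He [HC Hpl] Hs.
  unfold branchf in Hs. apply in_support_bind in Hs. destruct Hs as [[s3 bd'] [Hd Hr]].
  simpl in Hr. inversion Hr; subst s' rep bd'. clear Hr.
  destruct (dbl_spec k eps s c s3 bd Hk He HC Hd) as (D1&D2&D3&D4&D5&D6&D7&D8).
  assert (Hi : (1 <= st_cur s <= k)%nat) by (destruct HC; tauto).
  rewrite (pub_s1 k s c Hi) in D4.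
  assert (Hadv : CInv k eps (advf k s3) /\ st_n (advf k s3) = st_n s3 /\ st_dsum (advf k s3) = st_dsum s3 /\
     st_tau (advf k s3) = st_tau s3 /\ st_p (advf k s3) = st_p s3 /\ st_nhat (advf k s3) = st_nhat s3 /\
     st_last (advf k s3) = (if Req_EM_T (st_pub s3) (st_last s3) then st_last s3 else st_pub s3) /\
     st_cur (advf k s3) = (if Req_EM_T (st_pub s3) (st_last s3) then st_cur s3 else next k (st_cur s3)) /\
     st_pub (advf k s3) = st_pub s3).
  { unfold advf. destruct (Req_EM_T (st_pub s3) (st_last s3)) as [E|E].
    - split; [split; auto|]. repeat split; auto.
    - destruct D5 as (E1&E2&E3&E4&E5&E6&E7).
      split; [split; [apply mkCInv0; simpl; auto; apply next_range; auto|simpl; auto]|].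
      simpl. repeat split; auto. }
  destruct Hadv as (A1&A2&A3&A4&A5&A6&A7&A8&A9).
  split; [exact A1|]. split; [reflexivity|].
  split; [rewrite A2; exact D1|].
  split; [rewrite A3; exact D6|].
  split.
  - intros Hbd. destruct (D7 Hbd) as (F1&F2&F3).
    split; [rewrite A4; auto|]. split; [rewrite A5; auto|]. split.
    + intros Hc. subst c. apply (synced_V k eps); [apply A1|].
      rewrite A6, A7, F3. simpl.
      destruct (Req_EM_T (st_pub s3) (st_last s3)) as [E|E].
      * rewrite <- E, D4. rewrite <- (pub_s1 k s true Hi). reflexivity.
      * rewrite D4. rewrite <- (pub_s1 k s true Hi). reflexivity.
    + intros Hc. subst c. rewrite D4 in A7, A8. rewrite D3, Hpl in A7, A8.
      destruct (Req_EM_T (st_last s) (st_last s)) as [_|E]; [|congruence].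
      split; [|rewrite A7; auto].
      unfold Vs. rewrite A6, F3, A8, D2, A2, D1, A5, F2. simpl.
      unfold upd. rewrite Nat.eqb_refl. rewrite S_INR. ring.
  - split.
    + intros Hbd. destruct (D8 Hbd) as (F1&F2&F3). rewrite A4, A5, A3. auto.
    + split.
      * intros Hc Hne. subst c. rewrite A8, D4, D3, D2.
        destruct (Req_EM_T (Vs k s) (st_last s)); [congruence|reflexivity].
      * intros Hc. rewrite A8, D4, D3, D2.
        destruct c; destruct (Req_EM_T _ (st_last s)); auto.
        -- destruct Hc; [discriminate|congruence].
        -- rewrite Hpl in n; congruence.
Qed.

Lemma branch_wf k eps s c : (1 <= k)%nat -> 0 < eps -> CInv k eps s -> wf (branchf k eps s c).
Proof.
  intros Hk He [HC Hpl]. unfold branchf. apply wf_bind; [|intros [s3 bd] _; simpl; auto].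
  unfold dblf. destruct (is_pow2 (S (st_n s (st_cur s)))); simpl; auto.
  destruct (Nat.leb _ _) eqn:El; simpl; auto.
  apply wf_bind; [|intros; simpl; auto].
  apply Nat.leb_le in El.
  assert (Hp : st_p (s2f (s1f k s c) (st_cur s) (S (st_n s (st_cur s)))) = st_p s) by (destruct c; reflexivity).
  assert (Ht : st_tau (s2f (s1f k s c) (st_cur s) (S (st_n s (st_cur s)))) = st_tau s) by (destruct c; reflexivity).
  apply boundary_wf; rewrite Hp.
  - destruct HC as (H1&H2&H3&_). lra.
  - apply (new_p_le_stp k eps s); auto. simpl in El. assert (st_tau (s1f k s c) = st_tau s) by (destruct c; reflexivity). simpl. lia.
Qed.

Lemma step_wf k eps s : (1 <= k)%nat -> 0 < eps -> CInv k eps s -> wf (step k eps s).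
Proof.
  intros Hk He HC. rewrite step_eq. simpl.
  destruct HC as [HC Hpl]. assert (HC' := HC). destruct HC' as (H1&H2&H3&_).
  split; [lra|]. split; intros _; apply branch_wf; auto; split; auto.
Qed.

Lemma step_support k eps s a : in_support (step k eps s) a -> exists c, in_support (branchf k eps s c) a.
Proof. rewrite step_eq. simpl. intros [[_ H]|[_ H]]; eauto. Qed.

Lemma prefix_inv k eps m s b : (1 <= k)%nat -> 0 < eps -> in_support (prefix k eps m) (s, b) ->
  CInv k eps s /\ sumN (st_n s) k = m /\ (b = true -> st_tau s = st_dsum s /\ st_p s = new_p k eps (st_tau s)).
Proof.
  intros Hk He. revert s b. induction m as [|m IH]; intros s b H.
  - simpl in H. inversion H; subst s b. clear H. split; [split|].
    + apply mkCInv0; simpl; auto; try lra.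
      * intros j Hj. apply mkSiteInv; auto. intros; lia.
      * rewrite sumN_zero. reflexivity.
    + reflexivity.
    + split; [apply sumN_zero|discriminate].
  - change (in_support (bind (prefix k eps m) (fun '(s, _) => bind (step k eps s) (fun '(s', _, bd) => Ret (s', bd)))) (s, b)) in H.
    apply in_support_bind in H. destruct H as [[s0 b0] [H0 H1]].
    destruct (IH _ _ H0) as (I1&I2&I3).
    cbv beta iota in H1.
    apply in_support_bind in H1. destruct H1 as [[[s' rep] bd] [H2 H3]].
    simpl in H3. inversion H3; subst s b. clear H3.
    destruct (step_support _ _ _ _ H2) as [c Hc].
    destruct (branch_spec k eps s0 c s' rep bd Hk He I1 Hc) as (B1&B2&B3&B4&B5&B6&B7&B8).
    split; [exact B1|]. split.
    + rewrite B3. assert (Hi : (1 <= st_cur s0 <= k)%nat) by (destruct I1 as [[X _] _]; exact X).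
      assert (X := sumN_upd (st_n s0) (st_cur s0) (S (st_n s0 (st_cur s0))) k Hi). lia.
    + intros Hb. destruct (B6 Hb) as (F1&F2&F3). rewrite F1. split; auto.
Qed.

Definition Tn (k : nat) (s : state) : nat := sumN (st_n s) k.

Definition WInv (k : nat) (eps : R) (n0 m : nat) (s : state) : Prop :=
  CInv k eps s /\ st_p s = new_p k eps (st_tau s) /\ (st_tau s <= st_dsum s)%nat /\
  (n0 < 2 * st_tau s)%nat /\ (n0 <= Tn k s)%nat /\ (Tn k s + m <= 2 * n0)%nat.

Definition beta (k n0 : nat) (s : state) : nat :=
  ((if Nat.leb (st_tau s) n0 then 1 else 0) + (if Rle_dec (Vs k s) (st_last s) then 1 else 0))%nat.

Lemma dsum_le_T k eps s : CInv k eps s -> (st_dsum s <= Tn k s)%nat.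
Proof.
  intros [(H1&H2&H3&H4&H5&H6&H7) _]. rewrite H7. unfold Tn. apply sumN_le.
  intros j Hj. destruct (H6 j Hj) as (S1&S2&S3&S4). auto.
Qed.

Lemma win_step k eps n0 m s c s' rep bd : (1 <= k)%nat -> 0 < eps -> WInv k eps n0 (S m) s ->
  in_support (branchf k eps s c) (s', rep, bd) ->
  WInv k eps n0 m s' /\ Tn k s' = S (Tn k s) /\ rep = (if c then Some (st_cur s) else None) /\
  (beta k n0 s' <= beta k n0 s)%nat /\ (Vs k s = st_last s -> (beta k n0 s' + 1 <= beta k n0 s)%nat) /\
  (c = true -> Vs k s <> st_last s -> st_cur s' = next k (st_cur s)) /\
  ((c = false \/ Vs k s = st_last s) -> st_cur s' = st_cur s).
Proof.
  intros Hk He (W1&W2&W3&W4&W5&W6) Hs.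
  destruct (branch_spec k eps s c s' rep bd Hk He W1 Hs) as (B1&B2&B3&B4&B5&B6&B7&B8).
  assert (HT : Tn k s' = S (Tn k s)).
  { unfold Tn. rewrite B3. assert (Hi : (1 <= st_cur s <= k)%nat) by (destruct W1 as [[X _] _]; exact X).
    assert (X := sumN_upd (st_n s) (st_cur s) (S (st_n s (st_cur s))) k Hi). lia. }
  assert (Hds := dsum_le_T k eps s' B1).
  destruct bd.
  - destruct (B6 eq_refl) as (F1&F2&F3).
    assert (Hts : (st_tau s <= n0)%nat) by lia.
    assert (Hts' : (n0 < st_tau s')%nat) by lia.
    split; [|split; [exact HT|split; [exact B2|]]].
    { split; [exact B1|split; [rewrite F2, F1; reflexivity|split; [lia|split; [lia|split; lia]]]]. }
    unfold beta. apply Nat.leb_le in Hts. rewrite Hts.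
    destruct (Nat.leb_spec (st_tau s') n0); [lia|].
    split; [destruct (Rle_dec _ _); destruct (Rle_dec _ _); lia|].
    split; [intros E; destruct (Rle_dec (Vs k s) (st_last s)); [|lra]; destruct (Rle_dec _ _); lia|].
    split; auto.
  - destruct (B5 eq_refl) as (F1&F2&F3&F4).
    split; [|split; [exact HT|split; [exact B2|]]].
    { split; [exact B1|split; [rewrite F2, F1; exact W2|split; [lia|split; [lia|split; lia]]]]. }
    unfold beta. rewrite F1.
    destruct c.
    + assert (V := F3 eq_refl).
      destruct (Rle_dec (Vs k s') (st_last s')); [lra|].
      split; [lia|]. split; [intros E; destruct (Rle_dec (Vs k s) (st_last s)); [lia|lra]|]. split; auto.
    + destruct (F4 eq_refl) as [V1 V2]. rewrite V1, V2.
      split; [destruct (Rle_dec (Vs k s + 1) (st_last s)); destruct (Rle_dec (Vs k s) (st_last s)); try lia; lra|].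
      split; [intros E; destruct (Rle_dec (Vs k s + 1) (st_last s)); [lra|]; destruct (Rle_dec (Vs k s) (st_last s)); [lia|lra]|].
      split; auto.
Qed.

Definition Fw (k : nat) (eps : R) (m : nat) (g : list nat -> R) : state * option nat * bool -> R :=
  fun a => match a with (s', rep, _) =>
    Expect (window k eps m s') (fun l => g (match rep with Some i => i :: l | None => l end)) end.

Lemma Expect_window_S k eps m s g :
  Expect (window k eps (S m) s) g =
  st_sitep s * Expect (branchf k eps s true) (Fw k eps m g) +
  (1 - st_sitep s) * Expect (branchf k eps s false) (Fw k eps m g).
Proof.
  change (window k eps (S m) s) with (bind (step k eps s) (fun '(s', rep, _) =>
              bind (window k eps m s') (fun l =>
                Ret (match rep with Some i => i :: l | None => l end)))).
  rewrite Expect_bind. rewrite step_eq. cbn [Expect].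
  f_equal; f_equal; apply Expect_ext; intros [[s' rep] bd]; unfold Fw;
  rewrite Expect_bind; reflexivity.
Qed.

Lemma window_wf k eps n0 m s : (1 <= k)%nat -> 0 < eps -> WInv k eps n0 m s -> wf (window k eps m s).
Proof.
  intros Hk He. revert s. induction m as [|m IH]; intros s HW; [simpl; auto|].
  change (window k eps (S m) s) with (bind (step k eps s) (fun '(s', rep, _) =>
              bind (window k eps m s') (fun l =>
                Ret (match rep with Some i => i :: l | None => l end)))).
  apply wf_bind.
  - apply step_wf; auto. apply HW.
  - intros [[s' rep] bd] Ha. apply wf_bind; [|intros; simpl; auto].
    apply IH. destruct (step_support _ _ _ _ Ha) as [c Hc].
    apply (win_step k eps n0 m s c s' rep bd Hk He HW Hc).
Qed.

Definition inb (c : nat) (acc : list nat) : nat := if in_dec Nat.eq_dec c acc then 1%nat else 0%nat.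

Lemma inb_1 c acc : In c acc -> inb c acc = 1%nat.
Proof. unfold inb; destruct (in_dec Nat.eq_dec c acc); tauto. Qed.
Lemma inb_0 c acc : ~ In c acc -> inb c acc = 0%nat.
Proof. unfold inb; destruct (in_dec Nat.eq_dec c acc); tauto. Qed.

Definition AccInv (k K c : nat) (acc : list nat) (d : nat) : Prop :=
  (exists W, NoDup W /\ incl W acc /\ (Nat.min (d + inb c acc) K <= length W)%nat) /\
  (forall j, (1 <= j)%nat -> (j + d < K)%nat -> ~ In (Nat.iter j (next k) c) acc).

Lemma acc_move k K c acc d : AccInv k K c acc d -> (1 <= c <= k)%nat -> (K <= k)%nat ->
  AccInv k K (next k c) (acc ++ c :: nil) (S d).
Proof.
  intros [[W (HW1&HW2&HW3)] HJ] Hc HK.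
  assert (Hnext : (S d < K)%nat -> ~ In (next k c) (acc ++ c :: nil)).
  { intros Hl Hn. apply in_app_or in Hn. destruct Hn as [Hn|[Hn|[]]].
    - apply (HJ 1%nat); auto; lia.
    - apply (site_neq k c 1 Hc); [lia|]. simpl. auto. }
  split.
  - destruct (in_dec Nat.eq_dec (next k c) (acc ++ c :: nil)) as [Hn|Hn];
      [rewrite (inb_1 _ _ Hn)|rewrite (inb_0 _ _ Hn)].
    + assert (HKd : (K <= S d)%nat) by (destruct (Nat.lt_ge_cases (S d) K); [exfalso; apply Hnext; auto|auto]).
      destruct (in_dec Nat.eq_dec c acc) as [Hin|Hin]; [rewrite (inb_1 _ _ Hin) in HW3|rewrite (inb_0 _ _ Hin) in HW3].
      * exists W. split; auto. split; [intros x Hx; apply in_or_app; left; auto|]. lia.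
      * exists (c :: W). split; [constructor; auto|].
        split; [intros x [Hx|Hx]; apply in_or_app; [right; left; auto|left; auto]|]. cbn [length]. lia.
    + destruct (in_dec Nat.eq_dec c acc) as [Hin|Hin]; [rewrite (inb_1 _ _ Hin) in HW3|rewrite (inb_0 _ _ Hin) in HW3].
      * exists W. split; auto. split; [intros x Hx; apply in_or_app; left; auto|]. lia.
      * exists (c :: W). split; [constructor; auto|].
        split; [intros x [Hx|Hx]; apply in_or_app; [right; left; auto|left; auto]|]. cbn [length]. lia.
  - intros j Hj Hjd Hin. apply in_app_or in Hin.
    rewrite <- Nat.iter_succ_r in Hin. destruct Hin as [Hin|[Hin|[]]].
    + apply (HJ (S j)); auto; lia.
    + apply (site_neq k c (S j) Hc); [lia|]. auto.
Qed.

Lemma acc_stay k K c acc d : AccInv k K c acc d -> (1 <= c <= k)%nat -> (K <= k)%nat ->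
  AccInv k K c (acc ++ c :: nil) d.
Proof.
  intros [[W (HW1&HW2&HW3)] HJ] Hc HK. split.
  - rewrite (inb_1 c (acc ++ c :: nil)) by (apply in_or_app; right; left; auto).
    destruct (in_dec Nat.eq_dec c acc) as [Hin|Hin]; [rewrite (inb_1 _ _ Hin) in HW3|rewrite (inb_0 _ _ Hin) in HW3].
    + exists W. split; auto. split; [intros x Hx; apply in_or_app; left; auto|]. lia.
    + exists (c :: W). split; [constructor; auto|].
      split; [intros x [Hx|Hx]; apply in_or_app; [right; left; auto|left; auto]|]. cbn [length]. lia.
  - intros j Hj Hjd Hin. apply in_app_or in Hin. destruct Hin as [Hin|[Hin|[]]].
    + apply (HJ j); auto.
    + apply (site_neq k c j Hc); [lia|]. auto.
Qed.

Fixpoint Sfun (T m : nat) : R :=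
  match m with O => 0 | S m' => / INR T + Sfun (S T) m' end.

Definition Bnd (xn K : nat) (u th rho c : R) (m T b d : nat) : R :=
  if Nat.leb K d then 0 else u ^ (xn - d) * exp (- (th * c * Sfun T m)) / rho ^ b.

Definition G (k : nat) (L : list nat) : R :=
  match excluded_middle_informative (INR k / 8 < INR (distinct_count L)) with
  | left _ => 1 | right _ => 0 end.

Lemma G_bounds k L : 0 <= G k L <= 1.
Proof. unfold G. destruct (excluded_middle_informative _); lra. Qed.

Lemma Bnd_nonneg xn K u th rho c m T b d : 1 <= u -> 0 < rho -> 0 <= Bnd xn K u th rho c m T b d.
Proof.
  intros Hu Hr. unfold Bnd. destruct (Nat.leb K d); [lra|].
  apply Rmult_le_pos; [apply Rmult_le_pos; [apply pow_le; lra|left; apply exp_pos]|].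
  left; apply Rinv_0_lt_compat, pow_lt; auto.
Qed.

Lemma Bnd_mono_b xn K u th rho c m T b b' d : 1 <= u -> 0 < rho <= 1 -> (b' <= b)%nat ->
  Bnd xn K u th rho c m T b' d <= Bnd xn K u th rho c m T b d.
Proof.
  intros Hu Hr Hb. unfold Bnd. destruct (Nat.leb K d); [lra|].
  unfold Rdiv. apply Rmult_le_compat_l; [apply Rmult_le_pos; [apply pow_le; lra|left; apply exp_pos]|].
  apply Rinv_le_contravar; [apply pow_lt; lra|].
  replace b with (b' + (b - b'))%nat by lia. rewrite pow_add.
  assert (0 < rho ^ b') by (apply pow_lt; lra).
  assert (rho ^ (b - b') <= 1) by (rewrite <- (pow1 (b - b')); apply pow_incr; lra).
  assert (0 <= rho ^ (b - b')) by (apply pow_le; lra).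
  nra.
Qed.

Lemma pow_ge1 u n : 1 <= u -> 1 <= u ^ n.
Proof. intros H. rewrite <- (pow1 n). apply pow_incr. lra. Qed.

Lemma Bnd_move xn K u th rho c m T b d : 0 <= th <= 1 -> 1 <= u -> ((1 <= xn)%nat -> 1 <= u * (1 - th)) ->
  K = S xn -> 0 < rho ->
  Bnd xn K u th rho c m T b (S d) <= (1 - th) * Bnd xn K u th rho c m T b d.
Proof.
  intros Hth Hu Huw HK Hr. assert (HB := Bnd_nonneg xn K u th rho c m T b d Hu Hr).
  unfold Bnd in *. destruct (Nat.leb_spec K d) as [H1|H1].
  - destruct (Nat.leb_spec K (S d)); [lra|lia].
  - destruct (Nat.leb_spec K (S d)) as [H2|H2]; [nra|].
    replace (xn - d)%nat with (S (xn - S d)) by lia. simpl pow.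
    assert (Huw' := Huw ltac:(lia)).
    set (Y := u ^ (xn - S d) * exp (- (th * c * Sfun T m)) / rho ^ b).
    assert (0 <= Y).
    { unfold Y. apply Rmult_le_pos; [apply Rmult_le_pos; [apply pow_le; lra|left; apply exp_pos]|].
      left; apply Rinv_0_lt_compat, pow_lt; auto. }
    replace (u * u ^ (xn - S d) * exp (- (th * c * Sfun T m)) / rho ^ b) with (u * Y) by (unfold Y, Rdiv; ring).
    fold Y. nra.
Qed.

Lemma Bnd_good xn K u th rho c m T b d sp : 0 <= th <= 1 -> 1 <= u -> ((1 <= xn)%nat -> 1 <= u * (1 - th)) ->
  K = S xn -> 0 < rho -> 0 <= c -> (1 <= T)%nat -> c / INR T <= sp <= 1 ->
  sp * Bnd xn K u th rho c m (S T) b (S d) + (1 - sp) * Bnd xn K u th rho c m (S T) b d <=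
  Bnd xn K u th rho c (S m) T b d.
Proof.
  intros Hth Hu Huw HK Hr Hc HT Hsp.
  assert (HTp : 0 < INR T) by (apply lt_0_INR; lia).
  assert (0 <= c / INR T) by (apply Rdiv_le_0_compat; lra).
  assert (HM := Bnd_move xn K u th rho c m (S T) b d Hth Hu Huw HK Hr).
  assert (HX := Bnd_nonneg xn K u th rho c m (S T) b d Hu Hr).
  set (X := Bnd xn K u th rho c m (S T) b d) in *.
  assert (LHS : sp * Bnd xn K u th rho c m (S T) b (S d) + (1 - sp) * X <= X * (1 - sp * th)) by nra.
  eapply Rle_trans; [exact LHS|].
  unfold X, Bnd. destruct (Nat.leb K d); [lra|]. simpl Sfun.
  set (Z := u ^ (xn - d) * exp (- (th * c * Sfun (S T) m)) / rho ^ b).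
  assert (0 <= Z).
  { unfold Z. apply Rmult_le_pos; [apply Rmult_le_pos; [apply pow_le; lra|left; apply exp_pos]|].
    left; apply Rinv_0_lt_compat, pow_lt; auto. }
  replace (u ^ (xn - d) * exp (- (th * c * (/ INR T + Sfun (S T) m))) / rho ^ b)
    with (Z * exp (- (th * (c / INR T)))).
  2:{ unfold Z, Rdiv. replace (- (th * c * (/ INR T + Sfun (S T) m))) with (- (th * (c * / INR T)) + - (th * c * Sfun (S T) m)) by ring.
      rewrite exp_plus. ring. }
  apply Rmult_le_compat_l; auto.
  assert (X1 := exp_ineq1_le (- (th * (c / INR T)))). nra.
Qed.

Lemma Bnd_bad xn K u th rho c m T b d : 1 <= u -> 0 < rho -> (1 <= b)%nat ->
  rho <= exp (- (th * (c / INR T))) ->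
  Bnd xn K u th rho c m (S T) (b - 1) d <= Bnd xn K u th rho c (S m) T b d.
Proof.
  intros Hu Hr Hb He. unfold Bnd. destruct (Nat.leb K d); [lra|]. simpl Sfun.
  replace b with (S (b - 1)) at 2 by lia. simpl pow.
  set (P := u ^ (xn - d)). set (Q := exp (- (th * c * Sfun (S T) m))). set (R0 := rho ^ (b - 1)).
  assert (0 <= P) by (apply pow_le; lra). assert (0 < Q) by apply exp_pos. assert (0 < R0) by (apply pow_lt; lra).
  replace (exp (- (th * c * (/ INR T + Sfun (S T) m)))) with (exp (- (th * (c / INR T))) * Q).
  2:{ unfold Q. rewrite <- exp_plus. f_equal. unfold Rdiv. ring. }
  unfold Rdiv. rewrite Rinv_mult.
  assert (0 < / R0) by (apply Rinv_0_lt_compat; auto).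
  assert (1 <= exp (- (th * (c * / INR T))) * / rho).
  { apply Rmult_le_reg_r with rho; auto. rewrite Rmult_assoc, Rinv_l by lra. unfold Rdiv in He. lra. }
  assert (0 <= P * Q * / R0) by (apply Rmult_le_pos; [apply Rmult_le_pos; lra|lra]).
  replace (P * (exp (- (th * (c * / INR T))) * Q) * (/ rho * / R0)) with ((P * Q * / R0) * (exp (- (th * (c * / INR T))) * / rho)) by ring.
  nra.
Qed.

Lemma sitep_lower k eps n0 m s c : (1 <= k)%nat -> 0 < eps -> c = sqrt (INR k) / (2 * eps) ->
  8 * c <= INR n0 -> WInv k eps n0 m s ->
  (1 <= Tn k s)%nat /\ c / INR (Tn k s) <= st_sitep s <= 1 /\ c / INR (Tn k s) <= 1 / 8.
Proof.
  intros Hk He Hc Hn0 (W1&W2&W3&W4&W5&W6).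
  assert (Hs : 0 < sqrt (INR k)) by (apply sqrt_lt_R0; apply lt_0_INR; lia).
  assert (Hcp : 0 < c) by (rewrite Hc; apply Rdiv_lt_0_compat; lra).
  assert (Hn0p : (1 <= n0)%nat) by (destruct n0; [simpl in Hn0; lra|lia]).
  assert (HT : (1 <= Tn k s)%nat) by lia.
  assert (HTr : INR n0 <= INR (Tn k s)) by (apply le_INR; auto).
  assert (HTp : 0 < INR (Tn k s)) by (apply lt_0_INR; lia).
  assert (Hc8 : c / INR (Tn k s) <= 1 / 8).
  { apply Rmult_le_reg_r with (INR (Tn k s)); auto. unfold Rdiv. rewrite Rmult_assoc, Rinv_l by lra. lra. }
  split; auto. split; [|auto].
  assert (Hds := dsum_le_T k eps s W1).
  destruct W1 as [(H1&H2&H3&H4&H5&H6&H7) _].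
  rewrite H2. split; [|lra].
  rewrite W2. eapply Rle_trans; [|apply new_p_lower; auto; lia].
  apply Rmin_glb; [lra|].
  assert (Htau : (st_tau s <= Tn k s)%nat) by lia.
  assert (Htr : INR (st_tau s) <= INR (Tn k s)) by (apply le_INR; auto).
  assert (Htp : 0 < INR (st_tau s)) by (apply lt_0_INR; lia).
  replace (sqrt (INR k) / (2 * eps * INR (st_tau s))) with (c / INR (st_tau s)) by (rewrite Hc; field; lra).
  unfold Rdiv. apply Rmult_le_compat_l; [lra|]. apply Rinv_le_contravar; auto.
Qed.

Lemma chern k eps n0 xn K u th rho c :
  (1 <= k)%nat -> 0 < eps -> 0 <= th <= 1 -> 1 <= u -> ((1 <= xn)%nat -> 1 <= u * (1 - th)) ->
  0 < rho <= 1 - th / 8 -> c = sqrt (INR k) / (2 * eps) -> 8 * c <= INR n0 -> K = S xn -> (K <= k)%nat ->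
  INR k / 8 < INR K ->
  forall m s acc d, WInv k eps n0 m s -> AccInv k K (st_cur s) acc d ->
  1 - Bnd xn K u th rho c m (Tn k s) (beta k n0 s) d <= Expect (window k eps m s) (fun l => G k (acc ++ l)).
Proof.
  intros Hk He Hth Hu Huw Hrho Hc Hn0 HK HKk HKr.
  assert (Hs : 0 < sqrt (INR k)) by (apply sqrt_lt_R0; apply lt_0_INR; lia).
  assert (Hcp : 0 < c) by (rewrite Hc; apply Rdiv_lt_0_compat; lra).
  induction m as [|m IH]; intros s acc d HW HA.
  - simpl. rewrite app_nil_r.
    unfold Bnd. destruct (Nat.leb_spec K d) as [HKd|HKd].
    + assert (G k acc = 1).
      { unfold G. destruct (excluded_middle_informative _) as [_|Hn]; [reflexivity|].
        exfalso. apply Hn. destruct HA as [[W (HW1&HW2&HW3)] _].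
        assert (length W <= distinct_count acc)%nat.
        { unfold distinct_count. apply NoDup_incl_length; auto. intros x Hx. apply nodup_In. apply HW2; auto. }
        assert (K <= distinct_count acc)%nat by lia.
        apply le_INR in H0. lra. }
      lra.
    + simpl Sfun. rewrite Rmult_0_r, Ropp_0, exp_0, Rmult_1_r.
      assert (1 <= u ^ (xn - d)) by (apply pow_ge1; auto).
      assert (0 < rho ^ beta k n0 s) by (apply pow_lt; lra).
      assert (rho ^ beta k n0 s <= 1) by (rewrite <- (pow1 (beta k n0 s)); apply pow_incr; lra).
      assert (1 <= / rho ^ beta k n0 s).
      { rewrite <- Rinv_1. apply Rinv_le_contravar; auto. }
      assert (1 <= u ^ (xn - d) / rho ^ beta k n0 s) by (unfold Rdiv; nra).
      assert (X := G_bounds k acc). lra.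
  - rewrite Expect_window_S.
    destruct (sitep_lower k eps n0 (S m) s c Hk He Hc Hn0 HW) as (HT1&HT2&HT3).
    set (sp := st_sitep s) in *.
    set (T := Tn k s) in *. set (b := beta k n0 s) in *.
    assert (HC : CInv k eps s) by apply HW.
    assert (Hi : (1 <= st_cur s <= k)%nat) by (destruct HC as [[X _] _]; exact X).
    assert (Hwf := fun c0 => branch_wf k eps s c0 Hk He HC).
    assert (Fb : forall c0 a, in_support (branchf k eps s c0) a -> forall g, (forall l, 0 <= g l <= 1) -> 0 <= Fw k eps m g a <= 1).
    { intros c0 [[s' rep] bd] Ha g Hg. unfold Fw.
      destruct (win_step k eps n0 m s c0 s' rep bd Hk He HW Ha) as (X1&_).
      apply Expect_bounds; [lra| apply (window_wf k eps n0); auto|]. intros; apply Hg. }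
    assert (Gb : forall l, 0 <= (fun L => G k (acc ++ L)) l <= 1) by (intros; apply G_bounds).
    destruct (Req_EM_T (Vs k s) (st_last s)) as [Ebad|Egood].
    +
      assert (Hb1 : (1 <= b)%nat).
      { unfold b, beta. destruct (Rle_dec (Vs k s) (st_last s)); [lia|lra]. }
      assert (Hrho' : rho <= exp (- (th * (c / INR T)))).
      { assert (X := exp_ineq1_le (- (th * (c / INR T)))). assert (0 <= c / INR T) by (apply Rdiv_le_0_compat; [lra|apply lt_0_INR; lia]). nra. }
      assert (HBB := Bnd_bad xn K u th rho c m T b d Hu ltac:(lra) Hb1 Hrho').
      set (Y := Bnd xn K u th rho c m (S T) (b - 1) d) in *.
      assert (E : forall c0, 1 - Y <= Expect (branchf k eps s c0) (Fw k eps m (fun l => G k (acc ++ l)))).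
      { intros c0. apply (Expect_ge _ _ _ 1); auto.
        - intros a Ha. apply (Fb c0 a Ha); auto.
        - intros [[s' rep] bd] Ha.
          destruct (win_step k eps n0 m s c0 s' rep bd Hk He HW Ha) as (X1&X2&X3&X4&X5&X6&X7).
          assert (Hb' := X5 Ebad). assert (Hcur := X7 (or_intror Ebad)).
          unfold Fw. rewrite X3. destruct c0.
          + rewrite (Expect_ext _ _ (fun l => G k ((acc ++ st_cur s :: nil) ++ l))) by (intros; rewrite <- app_assoc; reflexivity).
            eapply Rle_trans; [|apply (IH s' _ d); auto; rewrite Hcur; apply acc_stay; auto].
            rewrite X2. fold T. assert (Xm := Bnd_mono_b xn K u th rho c m (S T) (b - 1) (beta k n0 s') d Hu ltac:(lra) ltac:(lia)).
            unfold Y. lra.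
          + eapply Rle_trans; [|apply (IH s' _ d); auto; rewrite Hcur; auto].
            rewrite X2. fold T. assert (Xm := Bnd_mono_b xn K u th rho c m (S T) (b - 1) (beta k n0 s') d Hu ltac:(lra) ltac:(lia)).
            unfold Y. lra. }
      assert (E1 := E true). assert (E2 := E false).
      assert (Hsp0 : 0 <= sp) by (assert (0 <= c / INR T) by (apply Rdiv_le_0_compat; [lra|apply lt_0_INR; lia]); lra).
      assert (sp * (1 - Y) <= sp * Expect (branchf k eps s true) (Fw k eps m (fun l => G k (acc ++ l)))) by (apply Rmult_le_compat_l; lra).
      assert ((1 - sp) * (1 - Y) <= (1 - sp) * Expect (branchf k eps s false) (Fw k eps m (fun l => G k (acc ++ l)))) by (apply Rmult_le_compat_l; lra).
      lra.
    +
      set (Y1 := Bnd xn K u th rho c m (S T) b (S d)) in *.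
      set (Y2 := Bnd xn K u th rho c m (S T) b d) in *.
      assert (E1 : 1 - Y1 <= Expect (branchf k eps s true) (Fw k eps m (fun l => G k (acc ++ l)))).
      { apply (Expect_ge _ _ _ 1); auto.
        - intros a Ha. apply (Fb true a Ha); auto.
        - intros [[s' rep] bd] Ha.
          destruct (win_step k eps n0 m s true s' rep bd Hk He HW Ha) as (X1&X2&X3&X4&X5&X6&X7).
          assert (Hcur := X6 eq_refl Egood).
          unfold Fw. rewrite X3.
          rewrite (Expect_ext _ _ (fun l => G k ((acc ++ st_cur s :: nil) ++ l))) by (intros; rewrite <- app_assoc; reflexivity).
          eapply Rle_trans; [|apply (IH s' _ (S d)); auto; rewrite Hcur; apply acc_move; auto].
          rewrite X2. fold T. assert (Xm := Bnd_mono_b xn K u th rho c m (S T) b (beta k n0 s') (S d) Hu ltac:(lra) X4).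
          unfold Y1. lra. }
      assert (E2 : 1 - Y2 <= Expect (branchf k eps s false) (Fw k eps m (fun l => G k (acc ++ l)))).
      { apply (Expect_ge _ _ _ 1); auto.
        - intros a Ha. apply (Fb false a Ha); auto.
        - intros [[s' rep] bd] Ha.
          destruct (win_step k eps n0 m s false s' rep bd Hk He HW Ha) as (X1&X2&X3&X4&X5&X6&X7).
          assert (Hcur := X7 (or_introl eq_refl)).
          unfold Fw. rewrite X3.
          eapply Rle_trans; [|apply (IH s' _ d); auto; rewrite Hcur; auto].
          rewrite X2. fold T. assert (Xm := Bnd_mono_b xn K u th rho c m (S T) b (beta k n0 s') d Hu ltac:(lra) X4).
          unfold Y2. lra. }
      assert (HG := Bnd_good xn K u th rho c m T b d sp Hth Hu Huw HK ltac:(lra) ltac:(lra) HT1 HT2).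
      fold Y1 Y2 in HG.
      assert (Hsp0 : 0 <= sp) by (assert (0 <= c / INR T) by (apply Rdiv_le_0_compat; [lra|apply lt_0_INR; lia]); lra).
      assert (sp * (1 - Y1) <= sp * Expect (branchf k eps s true) (Fw k eps m (fun l => G k (acc ++ l)))) by (apply Rmult_le_compat_l; lra).
      assert ((1 - sp) * (1 - Y2) <= (1 - sp) * Expect (branchf k eps s false) (Fw k eps m (fun l => G k (acc ++ l)))) by (apply Rmult_le_compat_l; lra).
      lra.
Qed.

Lemma Sfun_lower a : 0 < a -> forall m T, (1 <= T)%nat ->
  (2 * a * INR m - INR m * INR T - INR m * (INR m - 1) / 2) / (a * a) <= Sfun T m.
Proof.
  intros Ha m. induction m as [|m IH]; intros T HT.
  - simpl. unfold Rdiv. lra.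
  - simpl Sfun. assert (IH' := IH (S T) ltac:(lia)).
    assert (HTp : 0 < INR T) by (apply lt_0_INR; lia).
    assert (Htan : (2 * a - INR T) / (a * a) <= / INR T).
    { assert (/ INR T - (2 * a - INR T) / (a * a) = (INR T - a) ^ 2 / (INR T * (a * a))) by (field; lra).
      assert (0 <= (INR T - a) ^ 2 / (INR T * (a * a))).
      { apply Rdiv_le_0_compat; [apply pow2_ge_0|]. apply Rmult_lt_0_compat; nra. }
      lra. }
    rewrite S_INR in IH'. rewrite S_INR.
    assert ((2 * a * (INR m + 1) - (INR m + 1) * INR T - (INR m + 1) * (INR m + 1 - 1) / 2) / (a * a)
            = (2 * a - INR T) / (a * a) + (2 * a * INR m - INR m * (INR T + 1) - INR m * (INR m - 1) / 2) / (a * a))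
      by (field; lra).
    lra.
Qed.

Lemma Sfun_23 n : (1 <= n)%nat -> 2 / 3 <= Sfun n n.
Proof.
  intros Hn. assert (Hp : 0 < INR n) by (apply lt_0_INR; lia).
  assert (X := Sfun_lower (3 * INR n / 2) ltac:(lra) n n Hn).
  assert ((2 * (3 * INR n / 2) * INR n - INR n * INR n - INR n * (INR n - 1) / 2) /
     (3 * INR n / 2 * (3 * INR n / 2)) = 2 / 3 + 2 / (9 * INR n)) by (field; lra).
  assert (0 < 2 / (9 * INR n)) by (apply Rdiv_lt_0_compat; lra).
  lra.
Qed.


Lemma exp_sq x : 0 <= x -> (1 + x / 2) ^ 2 <= exp x.
Proof.
  intros Hx. replace x with (x / 2 + x / 2) at 2 by field. rewrite exp_plus.
  assert (X := exp_ineq1_le (x / 2)).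
  simpl. rewrite Rmult_1_r. apply Rmult_le_compat; lra.
Qed.

Lemma exp_mult_nat n y : exp (INR n * y) = exp y ^ n.
Proof.
  induction n; simpl.
  - rewrite Rmult_0_l. apply exp_0.
  - rewrite <- IHn. rewrite <- exp_plus. f_equal. destruct n; simpl; ring.
Qed.

Theorem mainTheorem2 :
  forall (k : nat) (eps : R),
    (1 <= k)%nat -> 0 < eps -> eps * sqrt (INR k) < 1 ->
  forall (n0 : nat), 4 * sqrt (INR k) / eps <= INR n0 ->
  forall s : state, in_support (prefix k eps n0) (s, true) ->
    1 - exp (- (sqrt (INR k) / (32 * eps)))
      <= Prob (window k eps n0 s)
              (fun l => INR k / 8 < INR (distinct_count l)).
Proof.
  intros k eps Hk He Hks n0 Hn0 s Hpre.
  change (1 - exp (- (sqrt (INR k) / (32 * eps))) <= Expect (window k eps n0 s) (fun l => G k (nil ++ l))).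
  destruct (prefix_inv k eps n0 s true Hk He Hpre) as (P1&P2&P3).
  destruct (P3 eq_refl) as [Htau Hp].
  assert (Hs : 0 < sqrt (INR k)) by (apply sqrt_lt_R0; apply lt_0_INR; lia).
  set (c := sqrt (INR k) / (2 * eps)).
  assert (Hcp : 0 < c) by (unfold c; apply Rdiv_lt_0_compat; lra).
  assert (Hn0c : 8 * c <= INR n0) by (unfold c; replace (8 * (sqrt (INR k) / (2 * eps))) with (4 * sqrt (INR k) / eps) by (field; lra); lra).
  assert (Hn0p : (1 <= n0)%nat) by (destruct n0; [simpl in Hn0c; lra|lia]).
  assert (Hck : INR k / 2 < c).
  { assert (Hsq := sqrt_sqrt (INR k) (pos_INR k)).
    unfold c. apply Rmult_lt_reg_r with (2 * eps); [lra|].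
    replace (sqrt (INR k) / (2 * eps) * (2 * eps)) with (sqrt (INR k)) by (field; lra).
    replace (INR k / 2 * (2 * eps)) with (eps * sqrt (INR k) * sqrt (INR k)) by (rewrite Rmult_assoc, Hsq; field).
    nra. }
  assert (HW : WInv k eps n0 n0 s).
  { split; [exact P1|]. split; [exact Hp|]. split; [lia|].
    split.
    - rewrite Htau. destruct P1 as [(H1&H2&H3&H4&H5&H6&H7) _]. rewrite H7. rewrite <- P2.
      apply sumN_half.
      + intros j Hj. destruct (H6 j Hj) as (S1&S2&S3&S4).
        destruct (Nat.eq_dec (st_n s j) 0); [lia|]. destruct (S4 ltac:(lia)). split; intros; lia.
      + lia.
    - unfold Tn. rewrite P2. lia. }
  set (xn := Nat.div k 8).
  assert (Hdm := Nat.div_mod k 8 ltac:(lia)). assert (Hmd := Nat.mod_upper_bound k 8 ltac:(lia)).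
  fold xn in Hdm.
  assert (HKk : (S xn <= k)%nat) by lia.
  assert (HKr : INR k / 8 < INR (S xn)).
  { assert (E8 : INR (8 * S xn) = 8 * INR (S xn)) by (rewrite mult_INR; simpl; ring).
    assert (INR k < INR (8 * S xn)) by (apply lt_INR; lia). lra. }
  assert (Hxn : 8 * INR xn <= INR k).
  { assert (E8 : INR (8 * xn) = 8 * INR xn) by (rewrite mult_INR; simpl; ring).
    assert (INR (8 * xn) <= INR k) by (apply le_INR; lia). lra. }
  assert (HA : AccInv k (S xn) (st_cur s) nil 0).
  { split.
    - exists nil. split; [constructor|]. split; [intros x []|]. simpl. lia.
    - intros j _ _ []. }
  assert (Hbeta : (beta k n0 s <= 2)%nat).
  { unfold beta. destruct (Nat.leb _ _); destruct (Rle_dec _ _); lia. }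
  assert (HS := Sfun_23 n0 Hn0p).
  assert (HT : Tn k s = n0) by exact P2.
  replace (sqrt (INR k) / (32 * eps)) with (c / 16) by (unfold c; field; lra).
  destruct (Nat.eq_dec xn 0) as [Hx0|Hx0].
  - assert (Hch := chern k eps n0 xn (S xn) 1 1 (7/8) c Hk He ltac:(lra) ltac:(lra) ltac:(intros; lia)
                   ltac:(lra) eq_refl Hn0c eq_refl HKk HKr n0 s nil 0 HW HA).
    eapply Rle_trans; [|exact Hch].
    assert (Xm := Bnd_mono_b xn (S xn) 1 1 (7/8) c n0 (Tn k s) 2 (beta k n0 s) 0 ltac:(lra) ltac:(lra) Hbeta).
    cut (Bnd xn (S xn) 1 1 (7 / 8) c n0 (Tn k s) 2 0 <= exp (- (c / 16))); [lra|].
    unfold Bnd. simpl Nat.leb. rewrite HT. rewrite pow1.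
    assert (exp (- (1 * c * Sfun n0 n0)) <= exp (- (2 / 3 * c))) by (apply exp_mono; nra).
    assert (Hk1 : 1 <= INR k) by (apply (le_INR 1 k) in Hk; simpl in Hk; lra).
    assert (E1 : (1 + (29 / 48 * c) / 2) ^ 2 <= exp (29 / 48 * c)) by (apply exp_sq; lra).
    assert (E2 : exp (- (2 / 3 * c)) * exp (29 / 48 * c) = exp (- (c / 16))).
    { rewrite <- exp_plus. f_equal. field. }
    assert (E3 : 64 / 49 <= (1 + (29 / 48 * c) / 2) ^ 2) by nra.
    assert (0 < exp (- (2 / 3 * c))) by apply exp_pos.
    replace ((7 / 8) ^ 2) with (49 / 64) by field.
    nra.
  - assert (Hch := chern k eps n0 xn (S xn) 2 (1/2) (15/16) c Hk He ltac:(lra) ltac:(lra) ltac:(intros; lra)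
                   ltac:(lra) eq_refl Hn0c eq_refl HKk HKr n0 s nil 0 HW HA).
    eapply Rle_trans; [|exact Hch].
    assert (Xm := Bnd_mono_b xn (S xn) 2 (1/2) (15/16) c n0 (Tn k s) 2 (beta k n0 s) 0 ltac:(lra) ltac:(lra) Hbeta).
    cut (Bnd xn (S xn) 2 (1/2) (15 / 16) c n0 (Tn k s) 2 0 <= exp (- (c / 16))); [lra|].
    unfold Bnd. simpl Nat.leb. rewrite HT. rewrite Nat.sub_0_r.
    assert (exp (- (1/2 * c * Sfun n0 n0)) <= exp (- (1 / 3 * c))) by (apply exp_mono; nra).
    assert (Hx1 : 1 <= INR xn) by (apply (le_INR 1 xn); lia).
    assert (Hcx : 4 * INR xn <= c) by lra.
    assert (E1 : exp (13 / 12 * INR xn) <= exp (13 / 48 * c)) by (apply exp_mono; lra).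
    rewrite Rmult_comm, exp_mult_nat in E1.
    assert (E2 : (1 + (13 / 12) / 2) ^ 2 <= exp (13 / 12)) by (apply exp_sq; lra).
    assert (E3 : 2 * (256 / 225) <= exp (13 / 12)) by (simpl in E2; lra).
    assert (E4 : (2 * (256 / 225)) ^ xn <= exp (13 / 12) ^ xn) by (apply pow_incr; lra).
    rewrite Rpow_mult_distr in E4.
    assert (E5 : 256 / 225 <= (256 / 225) ^ xn).
    { destruct xn as [|x]; [lia|]. simpl. assert (1 <= (256/225) ^ x) by (apply pow_ge1; lra). nra. }
    assert (E6 : exp (- (1 / 3 * c)) * exp (13 / 48 * c) = exp (- (c / 16))).
    { rewrite <- exp_plus. f_equal. field. }
    assert (0 < exp (- (1 / 3 * c))) by apply exp_pos.
    assert (0 < 2 ^ xn) by (apply pow_lt; lra).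
    replace ((15 / 16) ^ 2) with (225 / 256) by field.
    assert (2 ^ xn * (256 / 225) <= exp (13 / 48 * c)) by nra.
    assert (2 ^ xn * exp (- (1 / 2 * c * Sfun n0 n0)) <= 2 ^ xn * exp (- (1 / 3 * c))) by (apply Rmult_le_compat_l; lra).
    unfold Rdiv at 1. rewrite Rinv_div.
    nra.
Qed.
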